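(* For the initial pair $(t,x)$, the following are equivalent. i) There exists a unique $v^*\in l^2(\mathbb{T}_t; \mathbb{R}^{m_2})$ such that $J_2(k, X_k^*; {\alpha^t}(x, v^* )|_{\mathbb{T}_k}, v^*|_{\mathbb{T}_k})\leq J_2(k, X_k^*; {\alpha^t}(x, v^{*-k})|_{\mathbb{T}_k}, (v_k, v^*|_{\mathbb{T}_{k+1}}))$ for any $k\in\mathbb{T}_t$ and any $v_k\in l^2(k; \mathbb{R}^{m_2})$, where $X^*_{k+1}=AX^*_k+B_1[\alpha^t(x, v^* )]_{k}+B_2v^*_k$, $X^*_t=x$, and $v^{*-k}_\ell=v_k$ for $\ell=k$, $v^{*-k}_\ell=v^*_\ell$ for $\ell\neq k$, $\ell\in\mathbb{T}_t$ (the state inside the right-hand cost starts at $X_k^*$ at time $k$ and is driven by $\alpha^t(x,v^{*-k})$, $v^{*-k}$). ii) There exists a unique $v^*\in l^2(\mathbb{T}_t; \mathbb{R}^{m_2})$ such that, for all $k\in\mathbb{T}_t$, \begin{eqnarray*} 0&=&\Big{[}\widetilde{B}_{k}^T-\sum_{i=t}^{k-1}D_i^{(k)}(H_k^1)^TB_1^T\Big{]}Z_{k+1}^*+\Big(\widetilde{B}_{k}^T+\sum_{i=t}^{k-1}D_i^{(k)}\widetilde{A}_k^T\Big)\overline{Z}_{k+1}^{(k)*}+\Big{[}(H^2_k)^TR_2H_k^1+\sum_{i=t}^{k-1}D_i^{(k)}(H_k^1)^TR_2H_k^1\Big{]}X_k^*\\ &&+\Big{[}W_2+(H^2_k)^TR_2H^2_k+\sum_{i=t}^{k-1}D_i^{(k)}(H_k^1)^TR_2H^2_k\Big{]}v_k^*+\Big{[}(H^2_k)^TR_2H_k^3+\sum_{i=t}^{k-1}D_i^{(k)}(H_k^1)^TR_2H_k^3\Big{]}\pi_{k+1}^*,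 \end{eqnarray*} where $Z_k^*=Q_2X_{k}^*+A^TZ_{k+1}^*$, $Z_{N}^*=G_2X_N^*$; for each $k\in\mathbb{T}_t$, $\overline{Z}_{\ell}^{(k)*}=(H_{\ell}^1)^TR_2(H_{\ell}^1X_{\ell}^*+H^2_{\ell}v_{\ell}^*+H_{\ell}^3\pi_{\ell+1}^* )-(H_{\ell}^1)^TB_1^TZ_{\ell+1}^*+\widetilde{A}_{\ell}^T\overline{Z}_{\ell+1}^{(k)*}$, $\ell\in\mathbb{T}_k$, $\overline{Z}_{N}^{(k)*}=0$; and $X_{k+1}^*=\widetilde{A}_kX_k^*+\widetilde{B}_kv_{k}^*+\widetilde{C}_k\pi_{k+1}^*$, $\pi_k^*=C_k^Tv_k^*+\widetilde{A}_k^T\pi_{k+1}^*$, $X_t^*=x$, $\pi_{N}^*=0$. In this case, the $v^*$ of ii) is the one of i).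
   Context: Let $N>2$ be an integer, $\mathbb{T}_t=\{t,\ldots,N-1\}$, $l^2(\mathbb{T}_t;\mathbb{R}^m)$ the space of $\mathbb{R}^m$-valued sequences on $\mathbb{T}_t$, $l^2(k;\mathbb{R}^m)=\mathbb{R}^m$, $v|_{\mathbb{T}_k}=(v_k,\ldots,v_{N-1})$. System $X_{k+1}=AX_k+B_1u_k+B_2v_k$, $X_t=x$; costs $J_i(t,x;u,v)=\sum_{k=t}^{N-1}(X_k^TQ_iX_k+u_k^TR_iu_k+v_k^TW_iv_k)+X_N^TG_iX_N$, $i=1,2$, with $Q_i,G_i,R_i,W_i$ nonnegative definite; $J_i(k,y;\cdot,\cdot)$ is the same functional started at time $k$ from $y$. Assume $M_k=B_1^TP_{k+1}B_1+R_1>0$, $k\in\mathbb{T}_t$, where $P_k=Q_1+A^TP_{k+1}A-A^TP_{k+1}B_1M_k^{-1}B_1^TP_{k+1}A$, $P_N=G_1$. Set $H^1_k=M_k^{-1}B_1^TP_{k+1}A$, $H^2_k=M_k^{-1}B_1^TP_{k+1}B_2$, $H^3_k=M_k^{-1}B_1^T$, $\widetilde{A}_k=A-B_1H^1_k$, $\widetilde{B}_k=B_2-B_1H^2_k$, $\widetilde{C}_k=-B_1H^3_k$, $C_k=(B_2^T-B_2^TP_{k+1}B_1M_k^{-1}B_1^T)P_{k+1}A$, and $D_i^{(k)}=C_k\widetilde{A}_{k-1}\cdots \widetilde{A}_{i+1}\widetilde{C}_i^T\widetilde{A}_{i+1}^T \cdots \widetilde{A}_{k-1}^T$ (empty products equal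 $I$). The follower's equilibrium response map is $[\alpha^t(x,v)]_k=-(H^1_kX_k+H^2_kv_k+H^3_k\pi_{k+1})$, where $X_{k+1}=\widetilde{A}_kX_k+\widetilde{B}_kv_k+\widetilde{C}_k\pi_{k+1}$, $\pi_k=C_k^Tv_k+\widetilde{A}_k^T\pi_{k+1}$, $X_t=x$, $\pi_N=0$. *)

(* Defs.v *)
From HB Require Import structures.
From mathcomp Require Import all_boot all_order all_algebra.
From mathcomp Require Import reals.
Set Implicit Arguments. Unset Strict Implicit. Unset Printing Implicit Defensive.
Import Order.TTheory GRing.Theory Num.Theory.
Local Open Scope ring_scope.

(* Data of the leader-follower LQ game:
   X_{k+1} = A X_k + B1 u_k + B2 v_k,
   J_i = sum (X^T Q_i X + u^T R_i u + v^T W_i v) + X_N^T G_i X_N. *)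
Record game (R : realType) (n m1 m2 : nat) := Game {
  gA  : 'M[R]_n;
  gB1 : 'M[R]_(n, m1);
  gB2 : 'M[R]_(n, m2);
  gQ1 : 'M[R]_n;  gQ2 : 'M[R]_n;
  gG1 : 'M[R]_n;  gG2 : 'M[R]_n;
  gR1 : 'M[R]_m1; gR2 : 'M[R]_m1;
  gW1 : 'M[R]_m2; gW2 : 'M[R]_m2 }.

Section LQ.
Context {R : realType} {n m1 m2 : nat}.

Definition qf {p} (S : 'M[R]_p) (y : 'cV[R]_p) : R := (y^T *m S *m y) 0 0.

Definition nonneg_def {p} (S : 'M[R]_p) : Prop :=
  S^T = S /\ forall y : 'cV[R]_p, 0 <= qf S y.
Definition pos_def {p} (S : 'M[R]_p) : Prop :=
  S^T = S /\ forall y : 'cV[R]_p, y != 0 -> 0 < qf S y.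

Variable N : nat.
Variable g : game R n m1 m2.

Local Notation A := (gA g). Local Notation B1 := (gB1 g). Local Notation B2 := (gB2 g).
Local Notation Q1 := (gQ1 g). Local Notation G1 := (gG1 g). Local Notation R1 := (gR1 g).
Local Notation Q2 := (gQ2 g). Local Notation G2 := (gG2 g). Local Notation R2 := (gR2 g).
Local Notation W2 := (gW2 g).

(* Riccati: Pseq j = P_{N-j}; P_N = G1,
   P_k = Q1 + A^T P_{k+1} A - A^T P_{k+1} B1 M_k^{-1} B1^T P_{k+1} A *)
Fixpoint Pseq (j : nat) : 'M[R]_n :=
  match j with
  | 0 => G1
  | j'.+1 => let P := Pseq j' in
      Q1 + A^T *m P *m A
      - A^T *m P *m B1 *m invmx (B1^T *m P *m B1 + R1) *m B1^T *m P *m A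
  end.
Definition Pk (k : nat) : 'M[R]_n := Pseq (N - k).
Definition Mk (k : nat) : 'M[R]_m1 := B1^T *m Pk k.+1 *m B1 + R1.

Definition H1 (k : nat) : 'M[R]_(m1, n) := invmx (Mk k) *m B1^T *m Pk k.+1 *m A.
Definition H2 (k : nat) : 'M[R]_(m1, m2) := invmx (Mk k) *m B1^T *m Pk k.+1 *m B2.
Definition H3 (k : nat) : 'M[R]_(m1, n) := invmx (Mk k) *m B1^T.
Definition At (k : nat) : 'M[R]_n := A - B1 *m H1 k.
Definition Bt (k : nat) : 'M[R]_(n, m2) := B2 - B1 *m H2 k.
Definition Ct (k : nat) : 'M[R]_n := - (B1 *m H3 k).
Definition Ck (k : nat) : 'M[R]_(m2, n) :=
  (B2^T - B2^T *m Pk k.+1 *m B1 *m invmx (Mk k) *m B1^T) *m Pk k.+1 *m A.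

Fixpoint Phi (k s : nat) : 'M[R]_n :=
  match k with
  | 0 => 1%:M
  | k'.+1 => if k'.+1 <= s then 1%:M else At k' *m Phi k' s
  end%N.

Definition Dmat (i k : nat) : 'M[R]_(m2, n) :=
  Ck k *m Phi k i.+1 *m (Ct i)^T *m (Phi k i.+1)^T.

(* pi_k = C_k^T v_k + At_k^T pi_{k+1}, pi_N = 0;  piseq j = pi_{N-j} *)
Fixpoint piseq (v : nat -> 'cV[R]_m2) (j : nat) : 'cV[R]_n :=
  match j with
  | 0 => 0
  | j'.+1 => (Ck (N - j'.+1))^T *m v (N - j'.+1)%N + (At (N - j'.+1))^T *m piseq v j'
  end.
Definition piv (v : nat -> 'cV[R]_m2) (k : nat) : 'cV[R]_n := piseq v (N - k).

(* X_{k+1} = At_k X_k + Bt_k v_k + Ct_k pi_{k+1}, X_t = x;  Xtseq j = X_{t+j} *)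
Fixpoint Xtseq (t : nat) (x : 'cV[R]_n) (v : nat -> 'cV[R]_m2) (j : nat) : 'cV[R]_n :=
  match j with
  | 0 => x
  | j'.+1 => At (t + j') *m Xtseq t x v j' + Bt (t + j') *m v (t + j')%N
             + Ct (t + j') *m piv v (t + j').+1
  end.
Definition Xt (t : nat) (x : 'cV[R]_n) (v : nat -> 'cV[R]_m2) (k : nat) : 'cV[R]_n :=
  Xtseq t x v (k - t).

(* follower's equilibrium response [alpha^t(x,v)]_k *)
Definition alpha (t : nat) (x : 'cV[R]_n) (v : nat -> 'cV[R]_m2) (k : nat) : 'cV[R]_m1 :=
  - (H1 k *m Xt t x v k + H2 k *m v k + H3 k *m piv v k.+1).

(* state of the original system started at time k from y: trajseq j = X_{k+j} *)
Fixpoint trajseq (k : nat) (y : 'cV[R]_n) (u : nat -> 'cV[R]_m1)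
    (v : nat -> 'cV[R]_m2) (j : nat) : 'cV[R]_n :=
  match j with
  | 0 => y
  | j'.+1 => A *m trajseq k y u v j' + B1 *m u (k + j')%N + B2 *m v (k + j')%N
  end.
Definition traj (k : nat) (y : 'cV[R]_n) (u : nat -> 'cV[R]_m1)
    (v : nat -> 'cV[R]_m2) (l : nat) : 'cV[R]_n := trajseq k y u v (l - k).

Definition J2 (k : nat) (y : 'cV[R]_n) (u : nat -> 'cV[R]_m1) (v : nat -> 'cV[R]_m2) : R :=
  \sum_(k <= l < N) (qf Q2 (traj k y u v l) + qf R2 (u l) + qf (gW2 g) (v l))
  + qf G2 (traj k y u v N).

Definition upd (v : nat -> 'cV[R]_m2) (k : nat) (w : 'cV[R]_m2) : nat -> 'cV[R]_m2 :=
  fun l => if l == k then w else v l.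

Definition cond_i (t : nat) (x : 'cV[R]_n) (v : nat -> 'cV[R]_m2) : Prop :=
  let Xs := traj t x (alpha t x v) v in
  forall k, (t <= k < N)%N -> forall w : 'cV[R]_m2,
    J2 k (Xs k) (alpha t x v) v
    <= J2 k (Xs k) (alpha t x (upd v k w)) (upd v k w).

(* Z_k = Q2 X_k + A^T Z_{k+1}, Z_N = G2 X_N; Zseq j = Z_{N-j} *)
Fixpoint Zseq (t : nat) (x : 'cV[R]_n) (v : nat -> 'cV[R]_m2) (j : nat) : 'cV[R]_n :=
  match j with
  | 0 => G2 *m Xt t x v N
  | j'.+1 => Q2 *m Xt t x v (N - j'.+1) + A^T *m Zseq t x v j'
  end.
Definition Z (t : nat) (x : 'cV[R]_n) (v : nat -> 'cV[R]_m2) (k : nat) : 'cV[R]_n :=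
  Zseq t x v (N - k).

(* Zbar^{(k)}_l, l in T_k, Zbar_N = 0 (recursion independent of k);
   Zbarseq j = Zbar_{N-j} *)
Fixpoint Zbarseq (t : nat) (x : 'cV[R]_n) (v : nat -> 'cV[R]_m2) (j : nat) : 'cV[R]_n :=
  match j with
  | 0 => 0
  | j'.+1 => let l := (N - j'.+1)%N in
      (H1 l)^T *m R2 *m (H1 l *m Xt t x v l + H2 l *m v l + H3 l *m piv v l.+1)
      - (H1 l)^T *m B1^T *m Z t x v l.+1 + (At l)^T *m Zbarseq t x v j'
  end.
Definition Zbar (t : nat) (x : 'cV[R]_n) (v : nat -> 'cV[R]_m2) (k l : nat) : 'cV[R]_n :=
  Zbarseq t x v (N - l).

Definition cond_ii (t : nat) (x : 'cV[R]_n) (v : nat -> 'cV[R]_m2) : Prop :=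
  forall k, (t <= k < N)%N ->
    0 = ((Bt k)^T - \sum_(t <= i < k) Dmat i k *m (H1 k)^T *m B1^T) *m Z t x v k.+1
      + ((Bt k)^T + \sum_(t <= i < k) Dmat i k *m (At k)^T) *m Zbar t x v k k.+1
      + ((H2 k)^T *m R2 *m H1 k
         + \sum_(t <= i < k) Dmat i k *m (H1 k)^T *m R2 *m H1 k) *m Xt t x v k
      + (W2 + (H2 k)^T *m R2 *m H2 k
         + \sum_(t <= i < k) Dmat i k *m (H1 k)^T *m R2 *m H2 k) *m v k
      + ((H2 k)^T *m R2 *m H3 k
         + \sum_(t <= i < k) Dmat i k *m (H1 k)^T *m R2 *m H3 k) *m piv v k.+1.

End LQ.

(* existence and uniqueness of an element of l^2(T_t; R^m), i.e. a sequence
   identified by its values on T_t = {t,...,N-1} *)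
Definition exists_unique_on {T : Type} (t N : nat) (P : (nat -> T) -> Prop) : Prop :=
  exists v, P v /\ forall w, P w -> forall k, (t <= k < N)%N -> w k = v k.

(* Main.v *)
Require Import Defs.
From HB Require Import structures.
From mathcomp Require Import all_boot all_order all_algebra.
From mathcomp Require Import reals.
From mathcomp Require Import ring lra zify.
From Stdlib Require Import FunctionalExtensionality.
Import Order.TTheory GRing.Theory Num.Theory.
Local Open Scope ring_scope.


Lemma addr6 (V : zmodType) (a b c d e f : V) : a+b+(c+d)+(e+f) = a+c+e+(b+d+f).
Proof. rewrite (addrACA a b c d). by rewrite (addrACA (a+c) (b+d) e f). Qed.

Lemma entD (R : pzRingType) m n (A B : 'M[R]_(m, n)) i j : (A + B) i j = A i j + B i j.
Proof. by rewrite mxE. Qed.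
Lemma entN (R : pzRingType) m n (A : 'M[R]_(m, n)) i j : (- A) i j = - A i j.
Proof. by rewrite mxE. Qed.
Lemma entZ (R : pzRingType) m n (a : R) (A : 'M[R]_(m, n)) i j : (a *: A) i j = a * A i j.
Proof. by rewrite mxE. Qed.
Lemma trD (R : pzRingType) m n (A B : 'M[R]_(m, n)) : (A + B)^T = A^T + B^T.
Proof. by apply/matrixP=> i j; rewrite !mxE. Qed.
Lemma trN (R : pzRingType) m n (A : 'M[R]_(m, n)) : (- A)^T = - A^T.
Proof. by apply/matrixP=> i j; rewrite !mxE. Qed.
Lemma trZ (R : pzRingType) m n (a : R) (A : 'M[R]_(m, n)) : (a *: A)^T = a *: A^T.
Proof. by apply/matrixP=> i j; rewrite !mxE. Qed.
Lemma trsum (R : pzRingType) m n (I : Type) (r : seq I) (P : pred I) (F : I -> 'M[R]_(m, n)) :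
  (\sum_(i <- r | P i) F i)^T = \sum_(i <- r | P i) (F i)^T.
Proof.
apply: (big_rec2 (fun A B => A^T = B)); first by apply/matrixP=> i j; rewrite !mxE.
by move=> i A B _ <-; rewrite trD.
Qed.

Lemma rangeS a l N : (a.+1 <= l < N)%N -> (a <= l < N)%N.
Proof. lia. Qed.

Section Dot.
Context {R : realType}.

Definition dot {p} (u w : 'cV[R]_p) : R := (u^T *m w) 0 0.
Definition bil {p} (S : 'M[R]_p) (a b : 'cV[R]_p) : R := (a^T *m S *m b) 0 0.

Lemma bilE p (S : 'M[R]_p) a b : bil S a b = dot a (S *m b).
Proof. by rewrite /bil /dot mulmxA. Qed.
Lemma dotDl p (a b w : 'cV[R]_p) : dot (a + b) w = dot a w + dot b w.
Proof. by rewrite /dot trD mulmxDl entD. Qed.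
Lemma dotDr p (a b w : 'cV[R]_p) : dot w (a + b) = dot w a + dot w b.
Proof. by rewrite /dot mulmxDr entD. Qed.
Lemma dotNl p (a w : 'cV[R]_p) : dot (- a) w = - dot a w.
Proof. by rewrite /dot trN mulNmx entN. Qed.
Lemma dotNr p (a w : 'cV[R]_p) : dot w (- a) = - dot w a.
Proof. by rewrite /dot mulmxN entN. Qed.
Lemma dot0l p (w : 'cV[R]_p) : dot 0 w = 0.
Proof. by rewrite /dot trmx0 mul0mx mxE. Qed.
Lemma dot0r p (w : 'cV[R]_p) : dot w 0 = 0.
Proof. by rewrite /dot mulmx0 mxE. Qed.
Lemma dotM q p (M : 'M[R]_(q, p)) (u : 'cV[R]_p) (w : 'cV[R]_q) :
  dot (M *m u) w = dot u (M^T *m w).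
Proof. by rewrite /dot trmx_mul mulmxA. Qed.

Lemma dot_self0 p (u : 'cV[R]_p) : dot u u = 0 -> u = 0.
Proof.
rewrite /dot mxE => h; apply/matrixP => i j; rewrite (ord1 j) mxE.
have h2 : forall k : 'I_p, true -> 0 <= u^T 0 k * u k 0.
  by move=> k _; rewrite mxE -expr2 sqr_ge0.
have := (psumr_eq0P h2 h) i isT; rewrite mxE => /eqP.
by rewrite mulf_eq0 orbb => /eqP.
Qed.

Lemma telescope p N a (M : nat -> 'M[R]_p) (d b F Y : nat -> 'cV[R]_p) :
  (a <= N)%N ->
  (forall l, (a <= l < N)%N -> d l.+1 = M l *m d l + b l) ->
  (forall l, (a <= l < N)%N -> Y l = F l + (M l)^T *m Y l.+1) ->
  dot (d a) (Y a) + \sum_(a <= l < N) dot (b l) (Y l.+1)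
  = \sum_(a <= l < N) dot (d l) (F l) + dot (d N) (Y N).
Proof.
move=> aN; move Hj: (N - a)%N => j; elim: j a aN Hj => [|j IH] a aN Hj Hd HY.
  have -> : a = N by clear Hd HY; lia.
  by rewrite !big_geq // addr0 add0r.
have aN' : (a < N)%N by clear Hd HY IH; lia.
have hj : (N - a.+1)%N = j by clear Hd HY IH; lia.
rewrite (big_ltn aN') (big_ltn aN').
have := IH a.+1 aN' hj (fun l hl => Hd l (@rangeS a l N hl)) (fun l hl => HY l (@rangeS a l N hl)).
have ha : (a <= a < N)%N by rewrite leqnn aN'.
rewrite (Hd a ha) (HY a ha) dotDl dotDr dotM => h.
lra.
Qed.

Lemma qf_lin p (S : 'M[R]_p) s (a b : 'cV[R]_p) : S^T = S ->
  qf S (s *: a + b) = s ^+ 2 * qf S a + 2 * s * bil S a b + qf S b.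
Proof.
move=> hS; rewrite /qf /bil trD trZ !mulmxDl !mulmxDr -!scalemxAl -!scalemxAr.
have hba : (b^T *m S *m a) = (a^T *m S *m b)^T by rewrite !trmx_mul trmxK hS mulmxA.
rewrite hba !entD !entZ [(_^T) 0 0]mxE.
rewrite ?entZ. ring.
Qed.

Lemma final_alg (n m1 m2 : nat) (d : 'cV[R]_m2) (SD : 'M[R]_(m2, n))
  (B1 : 'M[R]_(n, m1)) (B2 : 'M[R]_(n, m2)) (H1 : 'M[R]_(m1, n)) (H2 : 'M[R]_(m1, m2))
  (H3 : 'M[R]_(m1, n)) (At : 'M[R]_n) (Bt : 'M[R]_(n, m2)) (Ct : 'M[R]_n)
  (R2 : 'M[R]_m1) (W2 : 'M[R]_m2)
  (Z Zb X p : 'cV[R]_n) (v : 'cV[R]_m2) :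
  Bt = B2 - B1 *m H2 ->
  dot (B1 *m (- (H1 *m (SD^T *m d) + H2 *m d + H3 *m 0)) + B2 *m d) Z
  + dot (- (H1 *m (SD^T *m d) + H2 *m d + H3 *m 0)) (R2 *m (- (H1 *m X + H2 *m v + H3 *m p)))
  + dot d (W2 *m v) + dot (At *m (SD^T *m d) + Bt *m d + Ct *m 0) Zb =
  dot d (
    (Bt^T - SD *m H1^T *m B1^T) *m Z
      + (Bt^T + SD *m At^T) *m Zb
      + (H2^T *m R2 *m H1 + SD *m H1^T *m R2 *m H1) *m X
      + (W2 + H2^T *m R2 *m H2 + SD *m H1^T *m R2 *m H2) *m v
      + (H2^T *m R2 *m H3 + SD *m H1^T *m R2 *m H3) *m p).
Proof.
move=> ->; rewrite /dot !mulmx0 !addr0.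
rewrite !(trD, trN, trmx_mul, trmxK).
rewrite !(mulmxDl, mulmxDr, mulmxN, mulNmx, mulmxA).
rewrite !(entD, entN).
lra.
Qed.

End Dot.

Section Aux.
Context {R : realType} {n m1 m2 : nat} (N : nat) (g : game R n m1 m2).

Local Notation A := (gA g). Local Notation B1 := (gB1 g). Local Notation B2 := (gB2 g).
Local Notation Q2 := (gQ2 g). Local Notation G2 := (gG2 g). Local Notation R2 := (gR2 g).
Local Notation W2 := (gW2 g).
Local Notation At := (At N g). Local Notation Bt := (Bt N g). Local Notation Ct := (Ct N g).
Local Notation Ck := (Ck N g). Local Notation H1 := (H1 N g). Local Notation H2 := (H2 N g).
Local Notation H3 := (H3 N g). Local Notation piv := (piv N g). Local Notation Xt := (Xt N g).
Local Notation traj := (traj g). Local Notation alpha := (alpha N g).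
Local Notation Z := (Z N g). Local Notation Zbar := (Zbar N g).

Lemma piv_N v : piv v N = 0.
Proof. by rewrite /Defs.piv subnn. Qed.

Lemma piv_S v l : (l < N)%N -> piv v l = (Ck l)^T *m v l + (At l)^T *m piv v l.+1.
Proof.
move=> lN; rewrite /Defs.piv -(subnSK lN) /=.
by rewrite subnSK // subKn // ltnW.
Qed.

Lemma Xt_t t x v : Xt t x v t = x.
Proof. by rewrite /Defs.Xt subnn. Qed.

Lemma Xt_S t x v l : (t <= l)%N ->
  Xt t x v l.+1 = At l *m Xt t x v l + Bt l *m v l + Ct l *m piv v l.+1.
Proof. by move=> tl; rewrite /Defs.Xt subSn //= subnKC. Qed.

Lemma Z_N t x v : Z t x v N = G2 *m Xt t x v N.
Proof. by rewrite /Defs.Z subnn. Qed.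

Lemma Z_S t x v l : (l < N)%N -> Z t x v l = Q2 *m Xt t x v l + A^T *m Z t x v l.+1.
Proof.
move=> lN; rewrite /Defs.Z -(subnSK lN) /=.
by rewrite subnSK // subKn // ltnW.
Qed.

Lemma Zbar_N t x v k : Zbar t x v k N = 0.
Proof. by rewrite /Defs.Zbar subnn. Qed.

Lemma Zbar_S t x v k l : (l < N)%N -> Zbar t x v k l =
  (H1 l)^T *m R2 *m (H1 l *m Xt t x v l + H2 l *m v l + H3 l *m piv v l.+1)
      - (H1 l)^T *m B1^T *m Z t x v l.+1 + (At l)^T *m Zbar t x v k l.+1.
Proof.
move=> lN; rewrite /Defs.Zbar -(subnSK lN) /=.
by rewrite subnSK // subKn // ltnW.
Qed.

Lemma traj_k k y u v : traj k y u v k = y.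
Proof. by rewrite /Defs.traj subnn. Qed.

Lemma traj_S k y u v l : (k <= l)%N ->
  traj k y u v l.+1 = A *m traj k y u v l + B1 *m u l + B2 *m v l.
Proof. by move=> tl; rewrite /Defs.traj subSn //= subnKC. Qed.

Definition lin {p} (s : R) (v1 v2 : nat -> 'cV[R]_p) := fun l => s *: v1 l + v2 l.

Lemma piv_lin s v1 v2 l : piv (lin s v1 v2) l = s *: piv v1 l + piv v2 l.
Proof.
rewrite /Defs.piv; elim: (N - l)%N => [|j IH] /=; first by rewrite scaler0 addr0.
rewrite IH /lin !mulmxDr -!scalemxAr scalerDr addrACA //.
Qed.

Lemma Xt_lin s t x1 x2 v1 v2 l :
  Xt t (s *: x1 + x2) (lin s v1 v2) l = s *: Xt t x1 v1 l + Xt t x2 v2 l.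
Proof.
rewrite /Defs.Xt; elim: (l - t)%N => [|j IH] //=.
rewrite IH piv_lin {1}/lin !mulmxDr -!scalemxAr !scalerDr.
by rewrite addr6.
Qed.

Lemma alpha_lin s t x1 x2 v1 v2 l :
  alpha t (s *: x1 + x2) (lin s v1 v2) l = s *: alpha t x1 v1 l + alpha t x2 v2 l.
Proof.
rewrite /Defs.alpha Xt_lin piv_lin /lin !mulmxDr -!scalemxAr scalerN -opprD !scalerDr.
by rewrite addr6.
Qed.

Lemma traj_lin s k y1 y2 u1 u2 v1 v2 l :
  traj k (s *: y1 + y2) (lin s u1 u2) (lin s v1 v2) l =
  s *: traj k y1 u1 v1 l + traj k y2 u2 v2 l.
Proof.
rewrite /Defs.traj; elim: (l - k)%N => [|j IH] //=.
rewrite IH /lin !mulmxDr -!scalemxAr !scalerDr.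
by rewrite addr6.
Qed.

End Aux.


Section Aux2.
Context {R : realType} {n m1 m2 : nat} (N : nat) (g : game R n m1 m2).

Local Notation A := (gA g). Local Notation B1 := (gB1 g). Local Notation B2 := (gB2 g).
Local Notation Q2 := (gQ2 g). Local Notation G2 := (gG2 g). Local Notation R2 := (gR2 g).
Local Notation W2 := (gW2 g).
Local Notation At := (At N g). Local Notation Bt := (Bt N g). Local Notation Ct := (Ct N g).
Local Notation Ck := (Ck N g). Local Notation H1 := (H1 N g). Local Notation H2 := (H2 N g).
Local Notation H3 := (H3 N g). Local Notation piv := (piv N g). Local Notation Xt := (Xt N g).
Local Notation traj := (traj g). Local Notation alpha := (alpha N g).
Local Notation Z := (Z N g). Local Notation Zbar := (Zbar N g).
Local Notation Phi := (Phi N g). Local Notation Dmat := (Dmat N g).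
Local Notation J2 := (J2 N g).

Lemma Phi_id s : Phi s s = 1%:M.
Proof. by case: s => //= s; rewrite leqnn. Qed.

Lemma Phi_S l s : (s <= l)%N -> Phi l.+1 s = At l *m Phi l s.
Proof. by move=> h /=; rewrite leqNgt ltnS h. Qed.

Lemma Phi_r k l : (l < k)%N -> Phi k l = Phi k l.+1 *m At l.
Proof.
elim: k => // k IH lk; rewrite Phi_S; last by rewrite -ltnS.
case: (ltngtP l k) => [lk'|kl|<-].
- by rewrite IH // Phi_S // mulmxA.
- by move: lk; rewrite ltnS leqNgt kl.
- by rewrite (Phi_id l) (Phi_id l.+1) mulmx1 mul1mx.
Qed.

Lemma traj_Xt t x v k l : (t <= k)%N -> (k <= l)%N ->
  traj k (Xt t x v k) (alpha t x v) v l = Xt t x v l.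
Proof.
move=> tk; elim: l => [|l IH].
  by rewrite leqn0 => /eqP ->; rewrite traj_k.
rewrite leq_eqVlt => /orP[/eqP <-|kl]; first by rewrite traj_k.
have kl' : (k <= l)%N by rewrite -ltnS.
have tl : (t <= l)%N by apply: leq_trans tk kl'.
rewrite traj_S // IH // Xt_S //.
rewrite /Defs.alpha /Defs.At /Defs.Bt /Defs.Ct.
apply/matrixP => i j.
rewrite !(mulmxBl, mulmxDr, mulmxN, mulNmx, mulmxA).
rewrite !(entD, entN). lra.
Qed.

Lemma Xs_eq t x v l : (t <= l)%N -> traj t x (alpha t x v) v l = Xt t x v l.
Proof. by move=> tl; have := traj_Xt t x v t l (leqnn t) tl; rewrite Xt_t. Qed.

End Aux2.


Section Aux3.
Context {R : realType} {n m1 m2 : nat} (N : nat) (g : game R n m1 m2).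

Local Notation A := (gA g). Local Notation B1 := (gB1 g). Local Notation B2 := (gB2 g).
Local Notation Q2 := (gQ2 g). Local Notation G2 := (gG2 g). Local Notation R2 := (gR2 g).
Local Notation W2 := (gW2 g).
Local Notation At := (At N g). Local Notation Bt := (Bt N g). Local Notation Ct := (Ct N g).
Local Notation Ck := (Ck N g). Local Notation H1 := (H1 N g). Local Notation H2 := (H2 N g).
Local Notation H3 := (H3 N g). Local Notation piv := (piv N g). Local Notation Xt := (Xt N g).
Local Notation traj := (traj g). Local Notation alpha := (alpha N g).
Local Notation Z := (Z N g). Local Notation Zbar := (Zbar N g).
Local Notation Phi := (Phi N g). Local Notation Dmat := (Dmat N g).
Local Notation J2 := (J2 N g).

Definition Gb k y1 u1 v1 y2 u2 v2 : R :=
  \sum_(k <= l < N) (bil Q2 (traj k y1 u1 v1 l) (traj k y2 u2 v2 l)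
     + bil R2 (u1 l) (u2 l) + bil W2 (v1 l) (v2 l))
  + bil G2 (traj k y1 u1 v1 N) (traj k y2 u2 v2 N).

Lemma J2_lin s k y1 y2 u1 u2 v1 v2 :
  Q2^T = Q2 -> R2^T = R2 -> W2^T = W2 -> G2^T = G2 ->
  J2 k (s *: y1 + y2) (lin s u1 u2) (lin s v1 v2) =
  s ^+ 2 * J2 k y1 u1 v1 + 2 * s * Gb k y1 u1 v1 y2 u2 v2 + J2 k y2 u2 v2.
Proof.
move=> hQ hR hW hG; rewrite /Defs.J2 /Gb.
under eq_bigr => l _ do rewrite traj_lin /lin !qf_lin //.
rewrite traj_lin qf_lin //.
rewrite !big_split /= -!mulr_sumr.
ring.
Qed.

Lemma J2_ge0 k y u v :
  nonneg_def Q2 -> nonneg_def R2 -> nonneg_def W2 -> nonneg_def G2 ->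
  0 <= J2 k y u v.
Proof.
move=> [_ hQ] [_ hR] [_ hW] [_ hG]; rewrite /Defs.J2 addr_ge0 //.
by apply: sumr_ge0 => l _; rewrite !addr_ge0.
Qed.

Lemma upd_lin (v : nat -> 'cV[R]_m2) k (d : 'cV[R]_m2) s :
  upd v k (s *: d + v k) = lin s (upd (fun _ => 0) k d) v.
Proof.
apply: functional_extensionality => l; rewrite /upd /lin.
by case: eqP => [->|_] //; rewrite scaler0 add0r.
Qed.

Lemma alpha_pert t x (e v : nat -> 'cV[R]_m2) s :
  alpha t x (lin s e v) = lin s (alpha t 0 e) (alpha t x v).
Proof.
apply: functional_extensionality => l.
by have := alpha_lin N g s t 0 x e v l; rewrite scaler0 add0r.
Qed.

Lemma J2_pert t x v k y d s :
  Q2^T = Q2 -> R2^T = R2 -> W2^T = W2 -> G2^T = G2 ->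
  let e := upd (fun _ => 0) k d in
  J2 k y (alpha t x (upd v k (s *: d + v k))) (upd v k (s *: d + v k)) =
  s ^+ 2 * J2 k 0 (alpha t 0 e) e + 2 * s * Gb k 0 (alpha t 0 e) e y (alpha t x v) v
  + J2 k y (alpha t x v) v.
Proof.
move=> hQ hR hW hG e; rewrite upd_lin alpha_pert.
by have := J2_lin s k 0 y (alpha t 0 e) (alpha t x v) e v hQ hR hW hG; rewrite scaler0 add0r.
Qed.

End Aux3.


Section Aux4.
Context {R : realType} {n m1 m2 : nat} (N : nat) (g : game R n m1 m2).

Local Notation A := (gA g). Local Notation B1 := (gB1 g). Local Notation B2 := (gB2 g).
Local Notation Q2 := (gQ2 g). Local Notation G2 := (gG2 g). Local Notation R2 := (gR2 g).
Local Notation W2 := (gW2 g).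
Local Notation At := (At N g). Local Notation Bt := (Bt N g). Local Notation Ct := (Ct N g).
Local Notation Ck := (Ck N g). Local Notation H1 := (H1 N g). Local Notation H2 := (H2 N g).
Local Notation H3 := (H3 N g). Local Notation piv := (piv N g). Local Notation Xt := (Xt N g).
Local Notation traj := (traj g). Local Notation alpha := (alpha N g).
Local Notation Z := (Z N g). Local Notation Zbar := (Zbar N g).
Local Notation Phi := (Phi N g). Local Notation Dmat := (Dmat N g).
Local Notation J2 := (J2 N g).


Definition Expr t x v k : 'cV[R]_m2 :=
  ((Bt k)^T - \sum_(t <= i < k) Dmat i k *m (H1 k)^T *m B1^T) *m Z t x v k.+1
      + ((Bt k)^T + \sum_(t <= i < k) Dmat i k *m (At k)^T) *m Zbar t x v k k.+1
      + ((H2 k)^T *m R2 *m H1 k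
         + \sum_(t <= i < k) Dmat i k *m (H1 k)^T *m R2 *m H1 k) *m Xt t x v k
      + (W2 + (H2 k)^T *m R2 *m H2 k
         + \sum_(t <= i < k) Dmat i k *m (H1 k)^T *m R2 *m H2 k) *m v k
      + ((H2 k)^T *m R2 *m H3 k
         + \sum_(t <= i < k) Dmat i k *m (H1 k)^T *m R2 *m H3 k) *m piv v k.+1.

Lemma cond_iiE t x v :
  cond_ii N g t x v <-> forall k, (t <= k < N)%N -> Expr t x v k = 0.
Proof. by split=> h k hk; [exact: esym (h k hk) | exact: esym (h k hk)]. Qed.

Lemma grad t x v k (d : 'cV[R]_m2) : (t <= k)%N -> (k < N)%N ->
  let e := upd (fun _ => 0) k d in
  Gb N g k 0 (alpha t 0 e) e (Xt t x v k) (alpha t x v) v = dot d (Expr t x v k).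
Proof.
move=> tk kN e.
have ek : e k = d by rewrite /e /upd eqxx.
have e0 : forall l, l != k -> e l = 0 by move=> l /negPf h; rewrite /e /upd h.
have dp0 : forall l, (k < l)%N -> piv e l = 0.
  move=> l kl; rewrite /Defs.piv.
  have : (N - l < N - k)%N by clear -kl kN; lia.
  elim: (N - l)%N => [|j IH] hj //=.
  rewrite IH; last by clear -hj; lia.
  rewrite e0; last by apply/eqP; clear -hj; lia.
  by rewrite !mulmx0 addr0.
have dpk : forall m, (m <= k)%N -> piv e (k - m) = (Phi k (k - m))^T *m (Ck k)^T *m d.
  elim=> [|m IH] hm.
    by rewrite subn0 piv_S // ek dp0 // mulmx0 addr0 (Phi_id N g k) trmx1 mul1mx.
  have h1 : (k - m.+1).+1 = (k - m)%N by clear -hm; lia.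
  have h2 : (k - m.+1 < k)%N by clear -hm; lia.
  rewrite piv_S; last by clear -hm kN; lia.
  rewrite e0; last by apply/eqP; clear -hm; lia.
  rewrite mulmx0 add0r h1 IH; last by clear -hm; lia.
  by rewrite (Phi_r N g _ _ h2) h1 (trmx_mul (Phi k (k - m))) !mulmxA.
have dpk' : forall l, (l <= k)%N -> piv e l = (Phi k l)^T *m (Ck k)^T *m d.
  by move=> l lk; have := dpk (k - l)%N (leq_subr l k); rewrite subKn.
have dX : forall l, (t <= l <= k)%N ->
    Xt t 0 e l = \sum_(t <= i < l) Phi l i.+1 *m Ct i *m piv e i.+1.
  elim=> [|l IH] /andP[tl lk].
    by move: tl; rewrite leqn0 => /eqP ->; rewrite Xt_t big_geq.
  case: (eqVneq t l.+1) => [<-|ne]; first by rewrite Xt_t big_geq.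
  have tl' : (t <= l)%N by clear -tl ne; lia.
  have lnk : l != k by rewrite neq_ltn lk.
  rewrite Xt_S // IH ?tl' ?(ltnW lk) // e0 // mulmx0 addr0 big_nat_recr //.
  rewrite (Phi_id N g l.+1) mul1mx mulmx_sumr.
  congr (_ + _); apply: eq_big_nat => i /andP[ti il].
  by rewrite Phi_S // !mulmxA.
have E_eq : Xt t 0 e k = (\sum_(t <= i < k) Dmat i k)^T *m d.
  rewrite dX ?tk ?leqnn // trsum mulmx_suml; apply: eq_big_nat => i /andP[ti ik].
  by rewrite dpk' // /Defs.Dmat !trmx_mul !trmxK !mulmxA.
have XsE : forall l, (k <= l)%N -> traj k (Xt t x v k) (alpha t x v) v l = Xt t x v l.
  by move=> l kl; apply: traj_Xt.
rewrite /Gb.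
under eq_big_nat => l /andP[kl _] do rewrite XsE //.
rewrite XsE ?(ltnW kN) //.
under eq_bigr => l _ do rewrite !bilE.
rewrite bilE.
set dT := traj k 0 (alpha t 0 e) e.
have T1 := @telescope R n N k (fun _ => A) dT
  (fun l => B1 *m alpha t 0 e l + B2 *m e l) (fun l => Q2 *m Xt t x v l) (Z t x v)
  (ltnW kN)
  (fun l hl => ltac:(by rewrite /dT traj_S ?(andP hl).1 // addrA))
  (fun l hl => ltac:(by rewrite Z_S ?(andP hl).2)).
rewrite /dT traj_k dot0l add0r Z_N in T1.
rewrite !big_split /=.
have kN1 : (k.+1 <= N)%N := kN.
have T2 := @telescope R n N k.+1 At (Xt t 0 e) (fun _ => 0)
  (fun l => (H1 l)^T *m R2 *m (H1 l *m Xt t x v l + H2 l *m v l + H3 l *m piv v l.+1)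
      - (H1 l)^T *m B1^T *m Z t x v l.+1) (Zbar t x v k) kN1
  (fun l hl => ltac:(by rewrite Xt_S ?(leq_trans tk (ltnW (andP hl).1)) // e0 ?(gtn_eqF (andP hl).1) // dp0 ?(ltnW (andP hl).1) // ?ltnS ?(ltnW (andP hl).1) // !mulmx0 !addr0))
  (fun l hl => ltac:(by rewrite Zbar_S ?(andP hl).2)).
rewrite Zbar_N dot0r addr0 big1 ?addr0 in T2; last by move=> l _; rewrite dot0l.
have Sb := @big_ltn _ 0 +%R k N (fun l => dot (B1 *m alpha t 0 e l + B2 *m e l) (Z t x v l.+1)) kN.
have S2 := @big_ltn _ 0 +%R k N (fun l => dot (alpha t 0 e l) (R2 *m alpha t x v l)) kN.
have S3 := @big_ltn _ 0 +%R k N (fun l => dot (e l) (W2 *m v l)) kN.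
have S3r : \sum_(k.+1 <= l < N) dot (e l) (W2 *m v l) = 0.
  rewrite big_nat_cond big1 // => l /andP[/andP[kl _] _].
  by rewrite e0 ?dot0l // gtn_eqF.
have Rest : \sum_(k.+1 <= l < N) dot (B1 *m alpha t 0 e l + B2 *m e l) (Z t x v l.+1)
   + \sum_(k.+1 <= l < N) dot (alpha t 0 e l) (R2 *m alpha t x v l)
   = \sum_(k.+1 <= l < N) dot (Xt t 0 e l)
      ((H1 l)^T *m R2 *m (H1 l *m Xt t x v l + H2 l *m v l + H3 l *m piv v l.+1)
      - (H1 l)^T *m B1^T *m Z t x v l.+1).
  rewrite -big_split /=; apply: eq_big_nat => l /andP[kl lN].
  rewrite /Defs.alpha e0 ?gtn_eqF // dp0; last by rewrite ltnS ltnW.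
  rewrite /dot !mulmx0 !addr0.
  rewrite !(trD, trN, trmx_mul, trmxK).
  rewrite !(mulmxDl, mulmxDr, mulmxN, mulNmx, mulmxA).
  rewrite !(entD, entN).
  lra.
have hdX : Xt t 0 e k.+1 = At k *m ((\sum_(t <= i < k) Dmat i k)^T *m d) + Bt k *m d + Ct k *m 0.
  by rewrite Xt_S // E_eq ek dp0.
have hdu : alpha t 0 e k = - (H1 k *m ((\sum_(t <= i < k) Dmat i k)^T *m d) + H2 k *m d + H3 k *m 0).
  by rewrite /Defs.alpha E_eq ek dp0.
have fin := @final_alg R n m1 m2 d (\sum_(t <= i < k) Dmat i k) B1 B2 (H1 k) (H2 k) (H3 k) (At k) (Bt k) (Ct k)
  R2 W2 (Z t x v k.+1) (Zbar t x v k k.+1) (Xt t x v k) (piv v k.+1) (v k) erefl.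
have hEx : Expr t x v k = ((Bt k)^T - (\sum_(t <= i < k) Dmat i k) *m (H1 k)^T *m B1^T) *m Z t x v k.+1
      + ((Bt k)^T + (\sum_(t <= i < k) Dmat i k) *m (At k)^T) *m Zbar t x v k k.+1
      + ((H2 k)^T *m R2 *m H1 k + (\sum_(t <= i < k) Dmat i k) *m (H1 k)^T *m R2 *m H1 k) *m Xt t x v k
      + (W2 + (H2 k)^T *m R2 *m H2 k + (\sum_(t <= i < k) Dmat i k) *m (H1 k)^T *m R2 *m H2 k) *m v k
      + ((H2 k)^T *m R2 *m H3 k + (\sum_(t <= i < k) Dmat i k) *m (H1 k)^T *m R2 *m H3 k) *m piv v k.+1.
  by rewrite /Expr !mulmx_suml.
rewrite hdu ek in Sb; rewrite hdu in S2; rewrite ek in S3; rewrite hdX in T2.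
rewrite hEx -fin /dT.
lra.
Qed.

End Aux4.


Lemma cond_iE (R : realType) (n m1 m2 N : nat) (g : game R n m1 m2) t x v :
  nonneg_def (gQ2 g) -> nonneg_def (gG2 g) -> nonneg_def (gR2 g) -> nonneg_def (gW2 g) ->
  cond_i N g t x v <-> cond_ii N g t x v.
Proof.
move=> hQ hG hR hW.
have [sQ _] := hQ; have [sG _] := hG; have [sR _] := hR; have [sW _] := hW.
rewrite cond_iiE /cond_i; split.
- move=> h k hk; have /andP[tk kN] := hk.
  set c := Expr N g t x v k.
  set e := upd (fun _ => 0) k c.
  set q := J2 N g k 0 (alpha N g t 0 e) e.
  have q0 : 0 <= q by apply: J2_ge0.
  have hG0 := grad N g t x v k c tk kN.
  rewrite -/e in hG0.
  set D := dot c c.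
  have hs : forall s : R, 0 <= s ^+ 2 * q + 2 * s * D.
    move=> s; have := h k hk (s *: c + v k).
    rewrite (J2_pert N g t x v k _ c s sQ sR sW sG) -/e -/q Xs_eq // hG0 -/D.
    lra.
  have hq1 : q + 1 != 0 by rewrite lt0r_neq0 // ltr_wpDl.
  set s := - D / (q + 1).
  have hD : D = - (s * (q + 1)) by rewrite /s divfK // opprK.
  have := hs s; rewrite hD => hs'.
  have hsq : s ^+ 2 <= 0 by nra.
  have s0 : s = 0.
    by apply/eqP; rewrite -sqrf_eq0 eq_le hsq sqr_ge0.
  by apply: dot_self0; rewrite -/D hD s0 mul0r oppr0.
- move=> h k hk w; have /andP[tk kN] := hk.
  have -> : w = 1 *: (w - v k) + v k by rewrite scale1r subrK.
  rewrite (J2_pert N g t x v k _ (w - v k) 1 sQ sR sW sG) Xs_eq //.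
  rewrite grad // h // dot0r.
  have := J2_ge0 N g k 0 (alpha N g t 0 (upd (fun=> 0) k (w - v k))) (upd (fun=> 0) k (w - v k)) hQ hR hW hG.
  lra.
Qed.


Theorem theorem2 (R : realType) (n m1 m2 N : nat) (g : game R n m1 m2)
    (t : nat) (x : 'cV[R]_n) :
  (2 < N)%N -> (t < N)%N ->
  nonneg_def (gQ1 g) -> nonneg_def (gQ2 g) ->
  nonneg_def (gG1 g) -> nonneg_def (gG2 g) ->
  nonneg_def (gR1 g) -> nonneg_def (gR2 g) ->
  nonneg_def (gW1 g) -> nonneg_def (gW2 g) ->
  (forall k, (t <= k < N)%N -> pos_def (Mk N g k)) ->
  (exists_unique_on t N (cond_i N g t x) <-> exists_unique_on t N (cond_ii N g t x))
  /\ (exists_unique_on t N (cond_i N g t x) ->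
      forall v w, cond_i N g t x v -> cond_ii N g t x w ->
      forall k, (t <= k < N)%N -> v k = w k).
Proof.
move=> _ _ _ hQ _ hG _ hR _ hW _.
have E v := @cond_iE R n m1 m2 N g t x v hQ hG hR hW.
split.
  split=> -[v [hv hu]]; exists v; split.
  - by apply/E.
  - by move=> w hw; apply: hu; apply/E.
  - by apply/E.
  - by move=> w hw; apply: hu; apply/E.
move=> [v0 [h0 hu]] v w hv hw k hk.
by rewrite (hu v hv k hk) (hu w (proj2 (E w) hw) k hk).
Qed.
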